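(* For every $n\ge1$, $$\hat B_{n+1}(x)=(n+1+x+nx^2)\,\hat B_n(x)+(1-x)(1+x^2)\,\hat B_n'(x).$$
   Context: $\mathcal B_n$ is the set of signed permutations (bijections $\sigma$ of $\{\pm1,\dots,\pm n\}$ with $\sigma(-i)=-\sigma(i)$), written as words $\sigma(1)\cdots\sigma(n)$ with $\sigma(0)=0$. An index $i\in\{0\}\cup[n-1]$ is an alternating descent of $\sigma$ if either $\sigma(i)<\sigma(i+1)$ and $i$ is even, or $\sigma(i)>\sigma(i+1)$ and $i$ is odd; $\hat B_n(x)=\sum_{\sigma\in\mathcal B_n}x^{\hat d_B(\sigma)}$ with $\hat d_B(\sigma)$ the number of alternating descents. *)

(* Defs.v *)
From HB Require Import structures.
From mathcomp Require Import all_boot all_order all_algebra all_fingroup.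
Set Implicit Arguments. Unset Strict Implicit. Unset Printing Implicit Defensive.
Import Order.TTheory GRing.Theory Num.Theory.
Local Open Scope ring_scope.

(* A signed permutation of {±1,…,±n} is encoded as a pair (p, s) with
   p : {perm 'I_n} and s : {ffun 'I_n -> bool}; it is the bijection
   sigma(k+1) = (-1)^(s k) * (p k + 1), extended by sigma(-i) = -sigma(i).
   This is a bijection between this finite type and B_n. *)
Definition signed_perm (n : nat) := ({perm 'I_n} * {ffun 'I_n -> bool})%type.

(* sigma(j) for j in {0,…,n}, with sigma(0) = 0 (entries beyond n are
   irrelevant and set to 0). *)
Definition sval_at (n : nat) (sg : signed_perm n) (j : nat) : int :=
  match j with
  | 0 => 0
  | k.+1 =>
      match insub k : option 'I_n with
      | Some i => (-1) ^+ (sg.2 i) * ((sg.1 i : nat).+1)%:Z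
      | None => 0
      end
  end.

Definition is_alt_descent (n : nat) (sg : signed_perm n) (i : nat) : bool :=
  ((sval_at sg i < sval_at sg i.+1) && ~~ odd i)
  || ((sval_at sg i > sval_at sg i.+1) && odd i).

Definition alt_des_B (n : nat) (sg : signed_perm n) : nat :=
  \sum_(0 <= i < n) is_alt_descent sg i.

Definition Bhat (n : nat) : {poly int} :=
  \sum_(sg : signed_perm n) 'X^(alt_des_B sg).

(* Main.v *)
Require Import Defs.
From mathcomp Require Import all_boot all_order all_algebra all_fingroup ring zify.
Import GRing.Theory Num.Theory.
Local Open Scope ring_scope.
Set Implicit Arguments. Unset Strict Implicit. Unset Printing Implicit Defensive.

Definition term (p x : int) (b : bool) : bool := ((p < x) && ~~ b) || ((x < p) && b).
Fixpoint ad (p : int) (b : bool) (w : seq int) : nat :=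
  if w is x :: w' then (term p x b + ad x (~~ b) w')%N else 0%N.

Lemma ad_cat p b s1 s2 :
  ad p b (s1 ++ s2) = (ad p b s1 + ad (last p s1) (b (+) odd (size s1)) s2)%N.
Proof.
elim: s1 p b => [|x s1 IH] p b /=; first by rewrite addbF.
by rewrite IH addnA addNb addbN.
Qed.

Lemma ad_neg p b s : ad (- p) b (map -%R s) = ad p (~~ b) s.
Proof.
elim: s p b => [|x s IH] p b //=.
rewrite IH negbK; congr (_ + _)%N.
by rewrite /term !ltrN2 negbK orbC.
Qed.

Lemma last_take_nth (x0 : int) w i : (i <= size w)%N ->
  last x0 (take i w) = nth x0 (x0 :: w) i.
Proof.
elim: w x0 i => [|y w IH] x0 [|i] //= Hi.
rewrite IH //; apply: set_nth_default => /=; lia.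
Qed.

Lemma ad_sum w : ad 0 false w =
  (\sum_(0 <= j < size w) term (last (0:int) (take j w)) (nth (0:int) w j) (odd j))%N.
Proof.
elim/last_ind: w => [|s x IH]; first by rewrite big_geq.
rewrite -cats1 ad_cat /= size_cat /= addn1 big_nat_recr //= IH addn0.
congr (_ + _)%N; last by rewrite take_size_cat // nth_cat ltnn subnn.
apply: eq_big_nat => j /andP [_ Hj].
by rewrite takel_cat ?(ltnW Hj) // nth_cat Hj.
Qed.
Definition ins (w : seq int) (j : nat) (e : bool) : seq int :=
  let v : int := Posz (size w).+1 in
  take j w ++ (if e then v else - v) :: map -%R (drop j w).

Section T.
Variables (a : int) (v : nat) (b : bool).
Hypothesis Ha : (absz a < v)%N.
Lemma term_aV : term a (Posz v) b = ~~ b.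
Proof. have h1 : a < Posz v by lia. have h2 : (Posz v < a) = false by lia.
by rewrite /term h1 h2 /= ?orbF ?andbF. Qed.
Lemma term_aNV : term a (- Posz v) b = b.
Proof. have h1 : (a < - Posz v) = false by lia. have h2 : (- Posz v < a) by lia.
by rewrite /term h1 h2 /= ?orbF ?andbF. Qed.
Lemma term_Va : term (Posz v) a b = b.
Proof. have h1 : a < Posz v by lia. have h2 : (Posz v < a) = false by lia.
by rewrite /term h1 h2 /= ?orbF ?andbF. Qed.
Lemma term_NVa : term (- Posz v) a b = ~~ b.
Proof. have h1 : (a < - Posz v) = false by lia. have h2 : (- Posz v < a) by lia.
by rewrite /term h1 h2 /= ?orbF ?andbF. Qed.
End T.

Lemma ad_ins_lt (w : seq int) j e : (forall z, z \in w -> (absz z <= size w)%N) -> (j < size w)%N ->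
  let c := term (last 0 (take j w)) (nth 0 w j) (odd j) in
  (c <= ad 0 false w)%N /\
  ad 0 false (ins w j e) = (ad 0 false w - c + (e (+) odd j).*2)%N.
Proof.
move=> Hb Hj c.
have Hs : size (take j w) = j by rewrite size_takel // ltnW.
have HL : (absz (last (0:int) (take j w)) < (size w).+1)%N.
  have : last 0 (take j w) \in 0 :: take j w by apply: mem_last.
  rewrite inE => /orP [/eqP -> //|/mem_take /Hb h]; by rewrite ltnS.
have Hx : (absz (nth (0:int) w j) < (size w).+1)%N.
  by rewrite ltnS; apply: Hb; apply: mem_nth.
have Hw : ad 0 false w = (ad 0 false (take j w) + c +
     ad (nth (0:int) w j) (~~ odd j) (drop j.+1 w))%N.
  by rewrite -{1}(cat_take_drop j w) ad_cat (drop_nth 0 Hj) /= Hs addnA.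
rewrite /ins (drop_nth 0 Hj) ad_cat /= Hs ad_neg negbK.
split; first by rewrite Hw; lia.
case: e => /=.
- rewrite term_aV // term_Va ?abszN //.
  rewrite Hw; case: (odd j); lia.
- rewrite term_aNV // term_NVa ?abszN //.
  rewrite Hw; case: (odd j); lia.
Qed.

Lemma ad_ins_end (w : seq int) e : (forall z, z \in w -> (absz z <= size w)%N) ->
  ad 0 false (ins w (size w) e) = (ad 0 false w + (e (+) odd (size w)))%N.
Proof.
move=> Hb.
have HL : (absz (last (0:int) w) < (size w).+1)%N.
  have : last 0 w \in 0 :: w by apply: mem_last.
  rewrite inE => /orP [/eqP -> //| /Hb h]; by rewrite ltnS.
rewrite /ins take_size drop_size ad_cat /= addn0.
by case: e => /=; rewrite ?term_aV ?term_aNV.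
Qed.
Definition valid n (w : seq int) := perm_eq (map absz w) (iota 1 n).

Definition trip (s : seq (seq int)) m :=
  [seq (x, e) | x <- [seq (w, j) | w <- s, j <- iota 0 m.+1], e <- [:: true; false]].

Fixpoint P n : seq (seq int) :=
  if n is m.+1 then [seq ins t.1.1 t.1.2 t.2 | t <- trip (P m) m] else [:: [::]].

Lemma valid_size n w : valid n w -> size w = n.
Proof. by move/perm_size; rewrite size_map size_iota. Qed.

Lemma valid_bound n w : valid n w -> forall z, z \in w -> (0 < absz z <= n)%N.
Proof.
move=> Hv z Hz.
have : absz z \in iota 1 n by rewrite -(perm_mem Hv); apply: map_f.
by rewrite mem_iota; lia.
Qed.

Lemma map_absN (s : seq int) : map absz (map -%R s) = map absz s.
Proof. by rewrite -map_comp; apply: eq_map => x /=; rewrite abszN. Qed.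

Lemma map_absz_ins (w : seq int) j e :
  map absz (ins w j e) = take j (map absz w) ++ (size w).+1 :: drop j (map absz w).
Proof.
rewrite /ins map_cat /= map_absN map_take map_drop.
by case: e; rewrite ?abszN.
Qed.

Lemma iotaS1 n : iota 1 n.+1 = iota 1 n ++ [:: n.+1].
Proof. by move: (iotaD 1 n 1); rewrite addn1 add1n. Qed.

Lemma perm_mid (T : eqType) (s1 s2 : seq T) x :
  perm_eq (s1 ++ x :: s2) (x :: s1 ++ s2).
Proof. by apply/permPl; exact: (perm_catCA s1 [:: x] s2). Qed.

Lemma iota_perm n : perm_eq (iota 1 n.+1) (n.+1 :: iota 1 n).
Proof. by rewrite iotaS1 perm_catC. Qed.

Lemma valid_ins n w j e : valid n w -> valid n.+1 (ins w j e).
Proof.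
move=> Hv; rewrite /valid map_absz_ins (valid_size Hv).
by rewrite (permPl (perm_mid _ _ _)) (permPr (iota_perm n)) perm_cons cat_take_drop.
Qed.

Lemma valid_dec n w : valid n.+1 w ->
  exists w' j e, [/\ valid n w', (j <= n)%N & w = ins w' j e].
Proof.
move=> Hv.
have Hs := valid_size Hv.
have Hin : n.+1 \in map absz w by rewrite (perm_mem Hv) mem_iota; lia.
set j := index n.+1 (map absz w).
have Hj : (j < n.+1)%N by rewrite -Hs -(size_map absz) index_mem.
have Hx : absz (nth 0 w j) = n.+1.
  by rewrite -(nth_map _ 0%N) ?Hs // nth_index.
set w' := take j w ++ map -%R (drop j.+1 w).
have Hsw : size (take j w) = j by rewrite size_takel // Hs ltnW.
have Hmw : map absz w = take j (map absz w) ++ n.+1 :: drop j.+1 (map absz w).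
  by rewrite -{1}(cat_take_drop j (map absz w)) (drop_nth 0%N) ?size_map ?Hs // nth_index.
have Hv' : valid n w'.
  move: Hv; rewrite /valid /w' map_cat map_absN.
  by rewrite Hmw (permPr (iota_perm n)) (permPl (perm_mid _ _ _)) perm_cons map_take map_drop.
have Hsw' : size w' = n by rewrite (valid_size Hv').
exists w', j, (0 < nth 0 w j); split => //.
rewrite /ins Hsw' /w' take_size_cat // drop_size_cat // -map_comp.
rewrite (eq_map (g := id)); last by move=> x /=; rewrite opprK.
rewrite map_id.
have -> : (if 0 < nth 0 w j then Posz n.+1 else - Posz n.+1) = nth 0 w j.
  case: ifP => H; lia.
by rewrite -drop_nth ?Hs // cat_take_drop.
Qed.
Lemma ins_index n w j e : valid n w -> (j <= n)%N ->
  index n.+1 (map absz (ins w j e)) = j.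
Proof.
move=> Hv Hj; rewrite map_absz_ins (valid_size Hv) index_cat.
have Hs : size (take j (map absz w)) = j by rewrite size_takel // size_map (valid_size Hv).
have -> : (n.+1 \in take j (map absz w)) = false.
  apply/negP => /mem_take /mapP [z Hz Ez].
  have := valid_bound Hv Hz; lia.
by rewrite Hs /= eqxx addn0.
Qed.

Lemma ins_inj n w1 w2 j1 j2 e1 e2 : valid n w1 -> valid n w2 ->
  (j1 <= n)%N -> (j2 <= n)%N -> ins w1 j1 e1 = ins w2 j2 e2 ->
  [/\ w1 = w2, j1 = j2 & e1 = e2].
Proof.
move=> H1 H2 Hj1 Hj2 E.
have Ej : j1 = j2 by rewrite -(ins_index e1 H1 Hj1) -(ins_index e2 H2 Hj2) E.
subst j2.
have S1 : size (take j1 w1) = j1 by rewrite size_takel // (valid_size H1).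
have S2 : size (take j1 w2) = j1 by rewrite size_takel // (valid_size H2).
have Ee : e1 = e2.
  move: (congr1 (nth 0 ^~ j1) E); rewrite /ins !nth_cat S1 S2 ltnn subnn /=.
  rewrite (valid_size H1) (valid_size H2).
  by clear E; case: e1; case: e2 => //= h; lia.
have Et : take j1 w1 = take j1 w2.
  by move: (congr1 (take j1) E); rewrite /ins !take_size_cat.
have Ed : drop j1 w1 = drop j1 w2.
  move: (congr1 (drop j1.+1) E); rewrite /ins !drop_cat S1 S2 ltnNge leqnSn subSnn /= !drop0.
  by move/(inj_map (@oppr_inj _)).
by split=> //; rewrite -(cat_take_drop j1 w1) Et Ed cat_take_drop.
Qed.

Lemma trip_mem s m t : t \in trip s m ->
  [/\ t.1.1 \in s, (t.1.2 <= m)%N & t = (t.1.1, t.1.2, t.2)].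
Proof.
move/allpairsP; case => [[x e] [Hx _ ->]].
move/allpairsP: Hx; case => [[w j] [Hw Hj ->]].
by move: Hj; rewrite mem_iota /= => Hj; split => //; lia.
Qed.

Lemma memP n w : (w \in P n) = valid n w.
Proof.
elim: n w => [|m IH] w.
  apply/idP/idP; first by rewrite inE => /eqP ->.
  by move/valid_size/size0nil ->; rewrite inE.
apply/idP/idP.
  case/mapP => t /trip_mem [Hw Hj Et] ->.
  by apply: valid_ins; rewrite -IH.
case/valid_dec => w' [j [e [Hv Hj ->]]].
apply/mapP; exists (w', j, e) => //.
apply: allpairs_f; last by case: e.
by apply: allpairs_f; rewrite ?IH // mem_iota; lia.
Qed.

Lemma P_uniq n : uniq (P n).
Proof.
elim: n => [|m IH] //=.
rewrite map_inj_in_uniq.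
  apply: allpairs_uniq => //; last by move=> [a b] [c d].
  apply: allpairs_uniq => //; first exact: iota_uniq.
  by move=> [a b] [c d].
move=> t1 t2 /trip_mem [H1 J1 E1] /trip_mem [H2 J2 E2] E.
rewrite memP in H1; rewrite memP in H2.
case: (ins_inj H1 H2 J1 J2 E) => A B C.
by rewrite E1 E2 A B C.
Qed.
Definition word n (sg : signed_perm n) : seq int := [seq sval_at sg i.+1 | i <- iota 0 n].

Lemma sval_atE n (sg : signed_perm n) (i : 'I_n) :
  sval_at sg (val i).+1 = (-1) ^+ (sg.2 i) * ((sg.1 i : nat).+1)%:Z.
Proof. by rewrite /sval_at valK. Qed.

Lemma nth_word n (sg : signed_perm n) i : (i < n)%N ->
  nth 0 (word sg) i = sval_at sg i.+1.
Proof. by move=> Hi; rewrite (nth_map 0%N) ?size_iota // nth_iota. Qed.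

Lemma size_word n (sg : signed_perm n) : size (word sg) = n.
Proof. by rewrite size_map size_iota. Qed.

Lemma word_inj n : injective (@word n).
Proof.
move=> [p1 s1] [p2 s2] E.
have H : forall i : 'I_n, sval_at (p1, s1) (val i).+1 = sval_at (p2, s2) (val i).+1.
  by move=> i; rewrite -(nth_word (p1, s1) (ltn_ord i)) E nth_word.
have Hp : forall i, p1 i = p2 i /\ s1 i = s2 i.
  move=> i; move: (H i); rewrite !sval_atE /=.
  case: (s1 i); case: (s2 i) => /=; rewrite ?expr0 ?expr1 ?mul1r ?mulN1r => h.
  - by split => //; apply: ord_inj; lia.
  - lia.
  - lia.
  - by split => //; apply: ord_inj; lia.
congr pair; first by apply/permP => i; case: (Hp i).
by apply/ffunP => i; case: (Hp i).
Qed.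

Lemma perm_enum_map n (p : {perm 'I_n}) : perm_eq (map p (enum 'I_n)) (enum 'I_n).
Proof.
apply: uniq_perm; first by rewrite map_inj_uniq ?enum_uniq //; exact: perm_inj.
  exact: enum_uniq.
move=> x; rewrite mem_enum; apply/mapP; exists ((p^-1)%g x); rewrite ?mem_enum //.
by rewrite permKV.
Qed.

Lemma word_valid n (sg : signed_perm n) : valid n (word sg).
Proof.
rewrite /valid /word -val_enum_ord -!map_comp.
have -> : iota 1 n = [seq (val i).+1 | i <- enum 'I_n].
  by rewrite (map_comp (addn 1) val) val_enum_ord -(iotaDl 1 0).
rewrite (eq_map (g := fun i : 'I_n => (val (sg.1 i)).+1)); last first.
  by move=> i /=; rewrite valK abszMsign.
rewrite (map_comp (fun i : 'I_n => (val i).+1) sg.1).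
apply: perm_map; have := perm_enum_map sg.1; rewrite !enumT.
by [].
Qed.

Lemma valid_word n w : valid n w -> exists sg : signed_perm n, w = word sg.
Proof.
move=> Hv.
have Hs := valid_size Hv.
have Hu : uniq (map absz w) by rewrite (perm_uniq Hv) iota_uniq.
have Hb : forall i, (i < n)%N -> (0 < absz (nth 0%R w i) <= n)%N.
  by move=> i Hi; apply: (valid_bound Hv); apply: mem_nth; rewrite Hs.
pose f (i : 'I_n) : 'I_n := insubd i (absz (nth 0%R w i)).-1.
have Hf : forall i, val (f i) = (absz (nth 0%R w i)).-1.
  move=> i; rewrite val_insubd; case: ifP => // /negP; have := Hb _ (ltn_ord i); lia.
have f_inj : injective f.
  move=> i k E; apply: val_inj => /=.
  have E' : nth 0%N (map absz w) i = nth 0%N (map absz w) k.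
    rewrite !(nth_map 0) ?Hs //; move: (congr1 val E); rewrite !Hf.
    have := Hb _ (ltn_ord i); have := Hb _ (ltn_ord k); lia.
  by apply/eqP; rewrite -(nth_uniq 0%N _ _ Hu) ?size_map ?Hs // E'.
exists (perm f_inj, [ffun i : 'I_n => (nth 0 w i < 0)%R]).
apply: (@eq_from_nth _ 0); first by rewrite size_word.
move=> i; rewrite Hs => Hi.
rewrite nth_word //.
rewrite -[i.+1]/((val (Ordinal Hi)).+1) sval_atE permE ffunE Hf /= prednK.
  by rewrite mulz_sign_abs.
by case/andP: (Hb _ Hi).
Qed.

Lemma alt_word n (sg : signed_perm n) : alt_des_B sg = ad 0 false (word sg).
Proof.
rewrite ad_sum size_word /alt_des_B.
apply: eq_big_nat => i /andP [_ Hi].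
rewrite last_take_nth ?size_word 1?ltnW // nth_word //.
by case: i Hi => [|k] Hk //=; rewrite nth_word // ltnW.
Qed.

Lemma Bhat_P n : Bhat n = \sum_(w <- P n) 'X^(ad 0 false w).
Proof.
rewrite /Bhat (eq_bigr (fun sg => 'X^(ad 0 false (word sg)))); last first.
  by move=> sg _; rewrite alt_word.
rewrite -(big_map (@word n) predT (fun w => 'X^(ad 0 false w))).
apply: perm_big; apply: uniq_perm.
- by rewrite map_inj_uniq ?index_enum_uniq //; exact: word_inj.
- exact: P_uniq.
move=> w; rewrite memP; apply/mapP/idP.
  by case=> sg _ ->; exact: word_valid.
by case/valid_word => sg ->; exists sg => //; rewrite mem_index_enum.
Qed.
Lemma P_sum n (F : seq int -> {poly int}) :
  \sum_(w <- P n.+1) F w =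
  \sum_(w <- P n) \sum_(j <- iota 0 n.+1) \sum_(e <- [:: true; false]) F (ins w j e).
Proof. by rewrite /= big_map /trip big_allpairs big_allpairs. Qed.

Lemma sumX (c : nat -> bool) (D n : nat) :
  \sum_(0 <= j < n) ('X^(D - c j) : {poly int}) + 'X^D *+ (\sum_(0 <= j < n) c j)%N
  = 'X^D *+ n + 'X^(D.-1) *+ (\sum_(0 <= j < n) c j)%N.
Proof.
elim: n => [|n IH]; first by rewrite !big_geq // !mulr0n addr0.
rewrite !big_nat_recr //=.
have IH' := canRL (addrK _) IH.
rewrite IH' !mulrnDr.
case: (c n) => /=; rewrite ?subn1 ?subn0 !mulrS; ring.
Qed.

Definition G (n d : nat) : {poly int} :=
  ((n.+1)%:R + 'X + n%:R *: 'X^2) * 'X^d + (1 - 'X) * (1 + 'X^2) * ('X^d)^`().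

Lemma G_eq n d :
  (1 + 'X^2) * ('X^d *+ n + 'X^(d.-1) *+ d - 'X^d *+ d) + 'X^d * (1 + 'X) = G n d.
Proof.
rewrite /G derivXn -mul_polyC polyC_natr.
case: d => [|k] /=; first by rewrite !mulr0n expr0; ring.
rewrite !(exprS _ k); ring.
Qed.

Lemma per_w n w : valid n w ->
  \sum_(j <- iota 0 n.+1) \sum_(e <- [:: true; false]) ('X^(ad 0 false (ins w j e)) : {poly int})
  = G n (ad 0 false w).
Proof.
move=> Hv.
have Hs := valid_size Hv.
have Hb : forall z, z \in w -> (absz z <= size w)%N.
  by move=> z /(valid_bound Hv); rewrite Hs => /andP [].
rewrite -[iota 0 n.+1]/(index_iota 0 n.+1) big_nat_recr //=.
rewrite !big_cons big_nil !addr0.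
set d := ad 0 false w.
have -> : \sum_(0 <= j < n) \sum_(e <- [:: true; false]) ('X^(ad 0 false (ins w j e)) : {poly int})
   = \sum_(0 <= j < n) 'X^(d - term (last 0 (take j w)) (nth 0 w j) (odd j)) * (1 + 'X^2).
  apply: eq_big_nat => j /andP [_ Hj].
  rewrite !big_cons big_nil addr0.
  have Hj' : (j < size w)%N by rewrite Hs.
  case: (ad_ins_lt true Hb Hj') => Hc ->.
  case: (ad_ins_lt false Hb Hj') => _ ->.
  rewrite -/d !exprD; case: (odd j) => /=; rewrite mulr1 ?expr0 ?mul1n; ring.
rewrite -big_distrl /=.
have Hsum := sumX (fun j => term (last 0 (take j w)) (nth 0 w j) (odd j)) d n.
rewrite -Hs -ad_sum -/d Hs in Hsum.
rewrite (canRL (addrK _) Hsum).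
rewrite -Hs !ad_ins_end // Hs -/d.
rewrite -G_eq; case: (odd n) => /=; rewrite !exprD ?expr0 ?expr1; ring.
Qed.

Theorem mainTheorem10 (n : nat) : (1 <= n)%N ->
  Bhat n.+1 =
    ((n.+1)%:R + 'X + n%:R *: 'X^2) * Bhat n
    + (1 - 'X) * (1 + 'X^2) * (Bhat n)^`().
Proof.
move=> _.
rewrite !Bhat_P P_sum raddf_sum !mulr_sumr -big_split /=.
rewrite big_seq_cond [RHS]big_seq_cond.
apply: eq_bigr => w /andP [Hw _].
rewrite memP in Hw.
by rewrite per_w.
Qed.
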